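(* Let $(M,d)$ be a metric space and $Y\subseteq M$. Let $\mathcal{N}$ be a $\sigma$-algebra of subsets of $Y$ containing all Borel subsets of $Y$, and let $\nu$ be a measure on $\mathcal{N}$ such that $\nu(B(x,r)\cap Y)<+\infty$ for all $x\in Y$, $r>0$. Let $\upsilon_Y\in]0,+\infty[$ and assume that $Y$ is upper $\upsilon_Y$-Ahlfors regular with respect to $Y$, with constants $r_0\in]0,+\infty]$, $c_0$ as in the definition, and that $\nu(Y)<+\infty$ whenever $r_0<+\infty$. Let $s_1,s_2\in[0,\upsilon_Y[$ and $a\in]0,+\infty[$. Then there exists $c\in]0,+\infty[$ such that \[ \int_{Y\cap B(\xi,a\,d(x',x''))}\frac{d\nu(\eta)}{d(\xi,\eta)^{s_1}d(\eta,y)^{s_2}} \leq c\left(d(x',y)^{-s_2}d(x',x'')^{\upsilon_Y-s_1}+d(x',y)^{-s_1}d(x',x'')^{\upsilon_Y-s_2}\right) \] for all $x',x''\in Y$ with $x'\neq x''$, all $\xi\in\{x',x''\}$ and all $y\in Y\setminus B(x',2d(x',x''))$.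
   Context: For $\xi\in M$, $r>0$, $B(\xi,r)=\{\eta\in M: d(\xi,\eta)<r\}$. $Y$ is upper $\upsilon$-Ahlfors regular with respect to $Y$ if there exist $r_0\in]0,+\infty]$, $c_0\in]0,+\infty[$ with $\nu(B(x,r)\cap Y)\leq c_0r^{\upsilon}$ for all $x\in Y$, $r\in]0,r_0[$. *)

(* Defs.v *)
From HB Require Import structures.
From mathcomp Require Import all_boot all_order all_algebra.
From mathcomp Require Import all_classical all_reals all_analysis.
Set Implicit Arguments. Unset Strict Implicit. Unset Printing Implicit Defensive.
Import Order.TTheory GRing.Theory Num.Theory.
Local Open Scope classical_set_scope.
Local Open Scope ring_scope.

Definition is_metric {R : realType} {M : Type} (dist : M -> M -> R) : Prop :=
  (forall x y, dist x y = 0 <-> x = y) /\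
  (forall x y, dist x y = dist y x) /\
  (forall x y z, dist x z <= dist x y + dist y z).

Definition mball {R : realType} {M : Type} (dist : M -> M -> R) (x : M) (r : R)
  : set M := [set y | dist x y < r].

Definition mopen {R : realType} {M : Type} (dist : M -> M -> R) (U : set M) : Prop :=
  forall x, U x -> exists2 r : R, 0 < r & mball dist x r `<=` U.

(* Borel subsets of the metric subspace Y: the sigma-algebra on Y generated
   by the relatively open sets U /\ Y, U open in M. *)
Definition borel_sub {R : realType} {M : Type} (dist : M -> M -> R) (Y : set M)
  : set (set M) :=
  <<s Y, [set U `&` Y | U in mopen dist] >>.

(* Main.v *)
Require Import Defs.
From HB Require Import structures.
From mathcomp Require Import all_boot all_order all_algebra.
From mathcomp Require Import all_classical all_reals all_analysis.
Import Order.TTheory GRing.Theory Num.Theory.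
Local Open Scope classical_set_scope.
Local Open Scope ring_scope.
From mathcomp Require Import ring lra.
From mathcomp Require Import measurable_realfun.
Lemma mball_meas (R : realType) (d0 : measure_display) (M : measurableType d0)
  (dist : M -> M -> R) (Y : set M) x r :
  is_metric dist -> borel_sub dist Y `<=` measurable ->
  measurable (mball dist x r `&` Y).
Proof.
move=> [d0P [dsym dtri]] hb; apply: hb; apply: sub_gen_smallest.
exists (mball dist x r) => //.
move=> y; rewrite /mball /= => xy; exists (r - dist x y); first by rewrite subr_gt0.
move=> w /=; rewrite ltrBrDl => yw.
exact: (le_lt_trans (dtri x y w)).
Qed.

Lemma ahlfors_global (R : realType) (d0 : measure_display) (M : measurableType d0)
  (dist : M -> M -> R) (Y : set M) (nu : {measure set M -> \bar R})
  (upsY : R) (r0 : \bar R) (c0 : R) :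
  is_metric dist -> measurable Y -> borel_sub dist Y `<=` measurable ->
  0 < upsY -> (0 < r0)%E -> 0 < c0 ->
  (forall x r, Y x -> 0 < r -> (r%:E < r0)%E ->
     (nu (mball dist x r `&` Y) <= (c0 * powR r upsY)%:E)%E) ->
  ((r0 < +oo)%E -> (nu Y < +oo)%E) ->
  exists2 C : R, 0 < C & forall x r, Y x -> 0 < r ->
     (nu (mball dist x r `&` Y) <= (C * powR r upsY)%:E)%E.
Proof.
move=> hm mY hb ups0 r00 c00 hA hfin.
case: r0 r00 hA hfin => [r0| |] //; last first.
  by move=> _ hA _; exists c0 => // x r Yx r0; apply: hA; rewrite ?ltry.
move=> r00 hA hfin; rewrite lte_fin in r00.
have nuY : (nu Y < +oo)%E by apply: hfin; rewrite ltry.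
have nuY0 : (0 <= nu Y)%E by exact: measure_ge0.
set V := fine (nu Y).
have V0 : 0 <= V by rewrite /V fine_ge0.
have pr0 : 0 < powR r0 upsY by rewrite powR_gt0.
exists (c0 + V / powR r0 upsY).
  by rewrite ltr_pwDl // divr_ge0 // ltW.
move=> x r Yx r0'.
have pr : 0 < powR r upsY by rewrite powR_gt0.
have [rr0|rr0] := ltP r r0.
  apply: (le_trans (hA _ _ Yx r0' _)); first by rewrite lte_fin.
  by rewrite lee_fin ler_pM2r // lerDl divr_ge0 // ltW.
apply: (@le_trans _ _ (nu Y)).
  apply: le_measure; rewrite ?inE //; first exact: mball_meas.
rewrite -(fineK (_ : nu Y \is a fin_num)); last by rewrite ge0_fin_numE.
rewrite -/V lee_fin mulrDl.
apply: ler_wpDl; first by rewrite mulr_ge0 // ltW.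
rewrite -mulrA ler_peMr // ler_pdivlMl // mulr1.
by rewrite ge0_ler_powR // ?ltW // nnegrE ltW // (lt_le_trans r00).
Qed.
Lemma powRN_anti (R : realType) (x y s : R) :
  0 < x -> x <= y -> 0 <= s -> powR y (-s) <= powR x (-s).
Proof.
move=> x0 xy s0; rewrite !powRN.
have y0 : 0 < y by exact: lt_le_trans xy.
rewrite lef_pV2 ?posrE ?powR_gt0 //.
by apply: ge0_ler_powR; rewrite // nnegrE ltW.
Qed.

Definition Hs {R : realType} {M : Type} (dist : M -> M -> R) (Y : set M)
  (z : M) (r s : R) (eta : M) : \bar R :=
  (\sum_(k <oo) ((powR (r / 2 ^+ k.+1) (-s))%:E *
     (\1_(mball dist z (r / 2 ^+ k) `&` Y) eta)%:E))%E.

Lemma Hs_term_ge0 {R : realType} {M : Type} (dist : M -> M -> R) (Y : set M)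
  z r s eta k : (0 <= (powR (r / 2 ^+ k.+1) (-s))%:E *
     (\1_(mball dist z (r / 2 ^+ k) `&` Y) eta)%:E)%E.
Proof. by rewrite mule_ge0 // lee_fin ?powR_ge0. Qed.

Lemma series_cst_pinfty (R : realType) (u : nat -> \bar R) (c : R) :
  0 < c -> (forall k, c%:E <= u k)%E -> (\sum_(k <oo) u k = +oo)%E.
Proof.
move=> c0 cu; apply/eqyP => A A0.
have u0 k : (0 <= u k)%E by apply: le_trans (cu k); rewrite lee_fin ltW.
set n := Num.Def.archi_bound (A / c).
have hn : A / c < n%:R by apply: archi_boundP; rewrite divr_ge0 // ltW.
apply: (le_trans _ (nneseries_lim_ge n (fun k _ _ => u0 k))).
apply: (@le_trans _ _ (\sum_(0 <= k < n) c%:E)%E).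
  rewrite sumEFin lee_fin big_const_nat subn0 iter_addr addr0 -mulr_natr.
  by rewrite -ler_pdivrMl // mulrC ltW.
by apply: lee_sum => k _; exact: cu.
Qed.

Lemma Hs_ge (R : realType) (M : Type) (dist : M -> M -> R) (Y : set M)
  z r s eta : is_metric dist -> Y eta -> 0 < r -> 0 <= s -> dist z eta < r ->
  (((powR (dist z eta) s)%:E)^-1 <= Hs dist Y z r s eta)%E.
Proof.
move=> [d0P [dsym dtri]] Yeta r0 s0 dr.
have dge0 : 0 <= dist z eta.
  have := dtri z eta z; rewrite (proj2 (d0P z z) erefl) (dsym eta z).
  by move=> h; rewrite -(@pmulr_rge0 _ 2) // mulr2n mulrDl !mul1r.
have [d0|dpos] := eqVneq (dist z eta) 0.
  rewrite /Hs (@series_cst_pinfty _ _ (powR r (-s))) ?leey // ?powR_gt0 // => k.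
  have -> : \1_(mball dist z (r / 2 ^+ k) `&` Y) eta = 1 :> R.
    by rewrite indicE mem_set //; split => //; rewrite /mball /= d0 divr_gt0 // exprn_gt0.
  rewrite mule1 lee_fin; apply: powRN_anti => //; first by rewrite divr_gt0 // exprn_gt0.
  rewrite ler_pdivrMr ?exprn_gt0 // ler_peMr ?ltW //.
  by rewrite exprn_egt1 // ltr1n.
have dgt0 : 0 < dist z eta by rewrite lt_neqAle eq_sym dpos dge0.
pose P := fun n : nat => r / 2 ^+ n <= dist z eta.
have exP : exists n, P n.
  set n := Num.Def.archi_bound (r / dist z eta).
  have hn : r / dist z eta < n%:R by apply: archi_boundP; rewrite divr_ge0 // ltW.
  exists n; rewrite /P ler_pdivrMr ?exprn_gt0 // -ler_pdivrMl //.
  rewrite mulrC; apply: (le_trans (ltW hn)); rewrite -natrX ler_nat; exact/ltnW/ltn_expl.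
case: (ex_minnP exP) => m Pm mmin.
have m0 : m != 0%N.
  apply/eqP => m0; move: Pm; rewrite /P m0 expr0 divr1 => /(lt_le_trans dr).
  by rewrite ltxx.
have hlt : dist z eta < r / 2 ^+ m.-1.
  rewrite ltNge; apply/negP => h.
  by move: (mmin _ h); rewrite leqNgt ltn_predL lt0n m0.
apply: (@le_trans _ _ ((powR (r / 2 ^+ m) (-s))%:E)).
  rewrite inver powR_eq0 (negbTE dpos) /= lee_fin -powRN.
  by apply: powRN_anti => //; rewrite divr_gt0 // exprn_gt0.
rewrite /Hs; apply: le_trans (nneseries_lim_ge m (fun k _ _ => Hs_term_ge0 _ _ _ _ _ _ k)).
case: m m0 Pm mmin hlt => [//|m'] _ _ _ hlt /=.
rewrite big_nat_recr //=.
have -> : \1_(mball dist z (r / 2 ^+ m') `&` Y) eta = 1 :> R.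
  by rewrite indicE mem_set.
rewrite mule1 leeDr //.
by apply: sume_ge0 => k _; exact: Hs_term_ge0.
Qed.

Lemma powRX (R : realType) (x e : R) n : 0 <= x -> powR (x ^+ n) e = (powR x e) ^+ n.
Proof.
move=> x0; rewrite -powR_mulrn // powRAC powR_mulrn //; exact: powR_ge0.
Qed.

Lemma geo_eseries_le (R : realType) (K q : R) : 0 <= K -> 0 < q < 1 ->
  (\sum_(k <oo) (K * q ^+ k)%:E <= (K / (1 - q))%:E)%E.
Proof.
move=> K0 /andP[q0 q1].
apply: lime_le.
  by apply: is_cvg_ereal_nneg_natsum => n _; rewrite lee_fin mulr_ge0 // exprn_ge0 // ltW.
apply: nearW => n; rewrite sumEFin lee_fin.
have q1' : `|q| < 1 by rewrite ger0_norm ?ltW.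
by move: (geometric_le_lim n K0 q0 q1'); rewrite /series.
Qed.

Lemma Hs_int (R : realType) (d0 : measure_display) (M : measurableType d0)
  (dist : M -> M -> R) (Y : set M) (nu : {measure set M -> \bar R})
  (ups C : R) z r s (D : set M) :
  is_metric dist -> borel_sub dist Y `<=` measurable -> measurable D -> 0 < C ->
  (forall rho, 0 < rho -> (nu (mball dist z rho `&` Y) <= (C * powR rho ups)%:E)%E) ->
  0 < r -> 0 <= s -> s < ups ->
  (\int[nu]_(x in D) Hs dist Y z r s x <=
     (C * powR 2 ups / (1 - powR (2^-1) (ups - s)) * powR r (ups - s))%:E)%E.
Proof.
move=> hm hb mD C0 hC r0 s0 sups.
set q := powR (2^-1) (ups - s).
have q0 : 0 < q by rewrite powR_gt0.
have q1 : q < 1.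
  have h : powR (2^-1) (ups - s) < powR 1 (ups - s).
    apply: gt0_ltr_powR; rewrite ?subr_gt0 ?nnegrE //.
    by rewrite invf_lt1 // ltr1n.
  by rewrite powR1 in h.
set K := C * powR 2 ups * powR r (ups - s).
have K0 : 0 <= K by rewrite /K !mulr_ge0 ?powR_ge0 // ltW.
have -> : C * powR 2 ups / (1 - q) * powR r (ups - s) = K / (1 - q).
  by rewrite /K mulrAC.
have qq : 0 < q < 1 by rewrite q0 q1.
apply: (@le_trans _ _ (\sum_(k <oo) (K * q ^+ k)%:E)%E); last exact: geo_eseries_le.
rewrite /Hs integral_nneseries //; last first.
  by move=> n x _; exact: Hs_term_ge0.
  move=> n; apply: measurable_funeM; apply/measurable_realfun.measurable_EFinP.
  by apply: measurable_realfun.measurable_indic; exact: mball_meas.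
apply: lee_nneseries.
  move=> k _ _; apply: integral_ge0 => x _; exact: Hs_term_ge0.
move=> k _.
set t := r / 2 ^+ k.+1.
have t0 : 0 < t by rewrite divr_gt0 // exprn_gt0.
have rk : r / 2 ^+ k = 2 * t.
  rewrite /t exprS; field; rewrite expf_neq0 //.
have mind : measurable_fun D (EFin \o (\1_(mball dist z (r / 2 ^+ k) `&` Y) : M -> R)).
  by apply/measurable_realfun.measurable_EFinP; apply: measurable_realfun.measurable_indic; exact: mball_meas.
rewrite (ge0_integralZl_EFin _ mD _ mind) ?powR_ge0 //; last by move=> x _; rewrite lee_fin.
rewrite integral_indic //; last exact: mball_meas.
apply: (@le_trans _ _ ((powR t (-s))%:E * nu (mball dist z (r / 2 ^+ k) `&` Y))%E).
  apply: lee_wpmul2l; first by rewrite lee_fin powR_ge0.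
  apply: le_measure.
  - rewrite inE; apply: measurableI => //; exact: mball_meas.
  - rewrite inE; exact: mball_meas.
  - by move=> x [].
apply: (@le_trans _ _ ((powR t (-s))%:E * (C * powR (r / 2 ^+ k) ups)%:E)%E).
  apply: lee_wpmul2l; first by rewrite lee_fin powR_ge0.
  by apply: hC; rewrite divr_gt0 // exprn_gt0.
have e1 : powR (2 * t) ups = powR 2 ups * powR t ups by rewrite powRM // ltW.
have e2 : powR t (-s) * powR t ups = powR t (ups - s).
  by rewrite -powRD ?(addrC (-s)) // implybE (gt_eqF t0) orbT.
have e3 : powR t (ups - s) = powR r (ups - s) * q ^+ k.+1.
  rewrite /t powRM ?invr_ge0 ?exprn_ge0 ?(ltW r0) // -exprVn powRX //.
rewrite -EFinM lee_fin rk e1.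
have -> : powR t (-s) * (C * (powR 2 ups * powR t ups)) =
    C * powR 2 ups * (powR t (-s) * powR t ups) by ring.
rewrite e2 e3 exprSr.
have -> : C * powR 2 ups * (powR r (ups - s) * (q ^+ k * q)) = (K * q ^+ k) * q.
  by rewrite /K; ring.
apply: ler_piMr; [exact: mulr_ge0 K0 (exprn_ge0 _ (ltW q0)) | exact: ltW q1].
Qed.
Lemma my_le_integral (R : realType) (d0 : measure_display) (M : measurableType d0)
  (nu : {measure set M -> \bar R}) (D : set M) (f g : M -> \bar R) :
  (forall x, D x -> (0 <= f x)%E) -> (forall x, D x -> (f x <= g x)%E) ->
  (\int[nu]_(x in D) f x <= \int[nu]_(x in D) g x)%E.
Proof.
move=> f0 fg.
have g0 x : D x -> (0 <= g x)%E by move=> Dx; exact: (le_trans (f0 _ Dx) (fg _ Dx)).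
rewrite (ge0_integralE _ f0) (ge0_integralE _ g0).
apply: ereal_sup_le => _ [h /= hf <-]; exists h => //= x.
apply: (le_trans (hf x)); rewrite /patch; case: ifPn => // /set_mem Dx; exact: fg.
Qed.

Lemma Hs_meas (R : realType) (d0 : measure_display) (M : measurableType d0)
  (dist : M -> M -> R) (Y : set M) z r s (D : set M) :
  is_metric dist -> borel_sub dist Y `<=` measurable ->
  measurable_fun D (Hs dist Y z r s).
Proof.
move=> hm hb; rewrite /Hs.
apply: (ge0_emeasurable_sum (P := xpredT)).
  by move=> k x _ _; exact: Hs_term_ge0.
move=> n _; apply: measurable_funeM; apply/measurable_EFinP.
by apply: measurable_indic; exact: mball_meas.
Qed.

Lemma aux_inv (R : realType) (p q Q : R) : 0 <= p -> 0 < Q -> Q <= q ->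
  ((((p * q)%:E)^-1)%E <= (Q^-1)%:E * ((p%:E)^-1))%E.
Proof.
move=> p0 Q0 Qq.
have q0 : 0 < q by exact: lt_le_trans Qq.
have [->|pn0] := eqVneq p 0.
  by rewrite mul0r inve0 mulry gtr0_sg ?invr_gt0 // mul1e.
have pp : 0 < p by rewrite lt_neqAle eq_sym pn0.
rewrite !inver mulf_eq0 (negbTE pn0) (gt_eqF q0) /= -EFinM lee_fin invfM mulrC.
by rewrite ler_wpM2r ?invr_ge0 ?(ltW pp) // lef_pV2.
Qed.

Lemma q_lt1 (R : realType) (ups s : R) : s < ups -> powR (2^-1) (ups - s) < 1.
Proof.
move=> sups.
have h : powR (2^-1) (ups - s) < powR 1 (ups - s).
  apply: gt0_ltr_powR; rewrite ?subr_gt0 ?nnegrE //.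
  by rewrite invf_lt1 // ltr1n.
by rewrite powR1 in h.
Qed.

Lemma powR_div4 (R : realType) (x e : R) : 0 <= x ->
  powR (x / 4) (- e) = powR x (- e) * powR 4 e.
Proof.
move=> x0; rewrite powRM ?invr_ge0 //; congr (_ * _).
have h : powR 4 e * powR (4^-1) e = 1.
  by rewrite -powRM ?invr_ge0 // mulfV // powR1.
have p4 : powR 4 e != 0 by rewrite gt_eqF // powR_gt0.
have h' : powR (4^-1) e = (powR 4 e)^-1.
  by apply: (@mulfI _ (powR 4 e)) => //; rewrite h mulfV.
by rewrite powRN h' invrK.
Qed.

Theorem lemma4p5 (R : realType) (d0 : measure_display) (M : measurableType d0)
  (dist : M -> M -> R) (Y : set M) (nu : {measure set M -> \bar R})
  (upsY : R) (r0 : \bar R) (c0 : R) (s1 s2 a : R) :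
  is_metric dist ->
  measurable Y ->
  borel_sub dist Y `<=` measurable ->
  (forall x r, Y x -> 0 < r -> (nu (mball dist x r `&` Y) < +oo)%E) ->
  0 < upsY ->
  (0 < r0)%E -> 0 < c0 ->
  (forall x r, Y x -> 0 < r -> (r%:E < r0)%E ->
     (nu (mball dist x r `&` Y) <= (c0 * powR r upsY)%:E)%E) ->
  ((r0 < +oo)%E -> (nu Y < +oo)%E) ->
  0 <= s1 < upsY -> 0 <= s2 < upsY -> 0 < a ->
  exists2 c : R, 0 < c &
    forall x' x'' xi y, Y x' -> Y x'' -> x' <> x'' -> (xi = x' \/ xi = x'') ->
      Y y -> ~ mball dist x' (2 * dist x' x'') y ->
      (\int[nu]_(eta in Y `&` mball dist xi (a * dist x' x''))
          (((powR (dist xi eta) s1 * powR (dist eta y) s2)%:E)^-1)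
       <= (c * (powR (dist x' y) (- s2) * powR (dist x' x'') (upsY - s1)
              + powR (dist x' y) (- s1) * powR (dist x' x'') (upsY - s2)))%:E)%E.
Proof.
move=> hm mY hb _ ups0 r00 c00 hA hfin /andP[s10 s1u] /andP[s20 s2u] a0.
have [C C0 hC] := @ahlfors_global _ _ _ dist Y nu upsY r0 c0 hm mY hb ups0 r00 c00 hA hfin.
have [d0P [dsym dtri]] := hm.
set K1 := C * powR 2 upsY / (1 - powR (2^-1) (upsY - s1)).
set K2 := C * powR 2 upsY / (1 - powR (2^-1) (upsY - s2)).
have K10 : 0 < K1.
  apply: divr_gt0; first by rewrite mulr_gt0 // powR_gt0.
  by rewrite subr_gt0 q_lt1.
have K20 : 0 < K2.
  apply: divr_gt0; first by rewrite mulr_gt0 // powR_gt0.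
  by rewrite subr_gt0 q_lt1.
exists (powR 4 s2 * K1 * powR a (upsY - s1) + powR 4 s1 * (C + K2) * powR a (upsY - s2)).
  apply: addr_gt0; apply: mulr_gt0; rewrite ?powR_gt0 //;
    apply: mulr_gt0; rewrite ?powR_gt0 //; exact: addr_gt0.
move=> x' x'' xi y Yx' Yx'' neq hxi Yy nball.
have dge0 u v : 0 <= dist u v.
  have := dtri u v u; rewrite (proj2 (d0P u u) erefl) (dsym v u).
  by move=> h; rewrite -(@pmulr_rge0 _ 2) // mulr2n mulrDl !mul1r.
set D0 := dist x' x''.
have D0pos : 0 < D0.
  rewrite lt_neqAle dge0 andbT eq_sym; apply/eqP => h; apply: neq.
  exact: (proj1 (d0P _ _) h).
set del := dist x' y.
have hdel : 2 * D0 <= del by rewrite leNgt; apply/negP.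
have hxid : dist x' xi <= D0.
  by case: hxi => ->; rewrite ?(proj2 (d0P _ _) erefl) ?dge0.
have hxy : del / 2 <= dist xi y.
  have := dtri x' xi y; rewrite -/del => h; lra.
have delpos : 0 < del by lra.
set rho := a * D0.
have rhopos : 0 < rho by rewrite mulr_gt0.
have Yxi : Y xi by case: hxi => ->.
set A := powR (del / 4) (- s2).
set B := powR (del / 4) (- s1).
set kap := powR rho (- s2).
set H1 := Hs dist Y xi rho s1.
set H2 := Hs dist Y y rho s2.
set Dm := Y `&` mball dist xi rho.
have mDm : measurable Dm by rewrite /Dm setIC; exact: mball_meas.
have H1ge0 eta : (0 <= H1 eta)%E.
  by apply: nneseries_ge0 => n _ _; exact: Hs_term_ge0.
have H2ge0 eta : (0 <= H2 eta)%E.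
  by apply: nneseries_ge0 => n _ _; exact: Hs_term_ge0.
have mH1 : measurable_fun Dm H1 by exact: Hs_meas.
have mH2 : measurable_fun Dm H2 by exact: Hs_meas.
have A0 : 0 <= A by exact: powR_ge0.
have B0 : 0 <= B by exact: powR_ge0.
have kap0 : 0 <= kap by exact: powR_ge0.
have del4 : 0 < del / 4 by rewrite divr_gt0.
apply: (@le_trans _ _ (\int[nu]_(eta in Dm) (A%:E * H1 eta + B%:E * (kap%:E + H2 eta)))%E).
  apply: my_le_integral.
    by move=> eta _; rewrite inve_ge0 lee_fin mulr_ge0 ?powR_ge0.
  move=> eta [Yeta heta].
  have heta' : dist xi eta < rho by exact: heta.
  have hsum : del / 2 <= dist xi eta + dist eta y.
    by apply: le_trans hxy _; exact: dtri.
  have h1 : (((powR (dist xi eta) s1)%:E)^-1 <= H1 eta)%E.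
    exact: Hs_ge.
  have h2 : (((powR (dist eta y) s2)%:E)^-1 <= kap%:E + H2 eta)%E.
    have [hd2|hd2] := ltP (dist eta y) rho.
      apply: (le_trans _ (leeDr _ _)); last by rewrite lee_fin.
      rewrite dsym; apply: Hs_ge => //; by rewrite dsym.
    apply: (le_trans _ (leeDl _ _)) => //.
    have d2pos : 0 < dist eta y by exact: lt_le_trans hd2.
    rewrite inver gt_eqF ?powR_gt0 // lee_fin /kap powRN lef_pV2 ?posrE ?powR_gt0 //.
    by apply: ge0_ler_powR; rewrite // nnegrE ltW.
  have [hd2|hd2] := leP (del / 4) (dist eta y).
    apply: (le_trans (@aux_inv _ (powR (dist xi eta) s1) (powR (dist eta y) s2) _ (powR_ge0 _ _) (powR_gt0 s2 del4) _)).
      by apply: ge0_ler_powR; rewrite // nnegrE ?dge0 ?ltW.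
    apply: (le_trans _ (leeDl _ _)); last first.
      by apply: mule_ge0; rewrite ?lee_fin // adde_ge0 // lee_fin.
    rewrite -powRN -/A; apply: lee_wpmul2l => //; by rewrite lee_fin.
  have hd1 : del / 4 <= dist xi eta by lra.
  rewrite mulrC.
  apply: (le_trans (@aux_inv _ (powR (dist eta y) s2) (powR (dist xi eta) s1) _ (powR_ge0 _ _) (powR_gt0 s1 del4) _)).
    by apply: ge0_ler_powR; rewrite // nnegrE ?dge0 ?ltW.
  apply: (le_trans _ (leeDr _ _)); last first.
    by apply: mule_ge0; rewrite ?lee_fin.
  rewrite -powRN -/B; apply: lee_wpmul2l => //; by rewrite lee_fin.
have mk : measurable_fun Dm (fun _ : M => kap%:E) by exact: measurable_cst.
rewrite ge0_integralD //; last 4 first.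
- by move=> x _; apply: mule_ge0; rewrite ?lee_fin.
- exact: measurable_funeM.
- by move=> x _; apply: mule_ge0; rewrite ?lee_fin // adde_ge0 // lee_fin.
- by apply: measurable_funeM; exact: emeasurable_funD.
rewrite ge0_integralZl_EFin // ge0_integralZl_EFin //; last 2 first.
- by move=> x _; rewrite adde_ge0 // lee_fin.
- exact: emeasurable_funD.
rewrite ge0_integralD //.
have -> : (\int[nu]_(x in Dm) kap%:E = kap%:E * nu Dm)%E by exact: integral_cst.
have I1 : (\int[nu]_(x in Dm) H1 x <= (K1 * powR rho (upsY - s1))%:E)%E.
  apply: Hs_int => //; by move=> rh hr; apply: hC.
have I2 : (\int[nu]_(x in Dm) H2 x <= (K2 * powR rho (upsY - s2))%:E)%E.
  apply: Hs_int => //; by move=> rh hr; apply: hC.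
have Nm : (nu Dm <= (C * powR rho upsY)%:E)%E by rewrite /Dm setIC; apply: hC.
apply: (le_trans (leeD (lee_wpmul2l _ I1) (lee_wpmul2l _ (leeD (lee_wpmul2l _ Nm) I2)))); rewrite ?lee_fin //.
have ekap : kap * (C * powR rho upsY) = C * powR rho (upsY - s2).
  rewrite mulrCA /kap -powRD; last by rewrite implybE (gt_eqF rhopos) orbT.
  by rewrite addrC.
rewrite ekap /A /B !powR_div4 ?(ltW delpos) // /rho !powRM ?(ltW a0) ?(ltW D0pos) //.
set T1 := powR 4 s2 * K1 * powR a (upsY - s1).
set T2 := powR 4 s1 * (C + K2) * powR a (upsY - s2).
set X1 := powR del (- s2) * powR D0 (upsY - s1).
set X2 := powR del (- s1) * powR D0 (upsY - s2).
have T10 : 0 <= T1.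
  by apply: mulr_ge0; [apply: mulr_ge0; [exact: powR_ge0 | exact: ltW] | exact: powR_ge0].
have T20 : 0 <= T2.
  apply: mulr_ge0; [apply: mulr_ge0; [exact: powR_ge0 | ] | exact: powR_ge0].
  by apply: addr_ge0; exact: ltW.
have X10 : 0 <= X1 by apply: mulr_ge0; exact: powR_ge0.
have X20 : 0 <= X2 by apply: mulr_ge0; exact: powR_ge0.
match goal with |- is_true (?L <= _) =>
  have -> : L = T1 * X1 + T2 * X2 by rewrite /T1 /T2 /X1 /X2; ring end.
have -> : (T1 + T2) * (X1 + X2) = T1 * X1 + T2 * X2 + (T1 * X2 + T2 * X1) by ring.
by rewrite lerDl addr_ge0 // mulr_ge0.
Qed.
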